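(* The map $c\mapsto G(c)$ from $\mathbb{R}^m$ to the space of convex bodies of $\mathbb{R}^m$ (with the Hausdorff distance) is continuous. Moreover, for every $c\in\mathbb{R}^m\setminus\{0\}$, the map $t\mapsto G(tc)$ is strictly increasing with respect to inclusion on $t>0$.
   Context: For a convex body $K\subset\mathbb{R}^m$ its support function is $h_K(u)=\sup\{\langle u,x\rangle: x\in K\}$, and the Hausdorff distance between convex bodies is $d(K,L)=\sup_{\|u\|=1}|h_K(u)-h_L(u)|$. For an integrable random vector $X\in\mathbb{R}^m$, the Vitale zonoid $\mathbb{E}\underline{X}$ is the convex body with support function $h_{\mathbb{E}\underline{X}}(u)=\frac12\mathbb{E}|\langle u,X\rangle|$. For $c\in\mathbb{R}^m$, $G(c):=\mathbb{E}\underline{c+\xi}$ where $\xi\in\mathbb{R}^m$ is a standard Gaussian vector. *)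

(* Defs.v *)
From HB Require Import structures.
From mathcomp Require Import all_boot all_order all_algebra.
From mathcomp Require Import all_classical all_reals all_analysis.
Set Implicit Arguments. Unset Strict Implicit. Unset Printing Implicit Defensive.
Import Order.TTheory GRing.Theory Num.Theory.
Local Open Scope classical_set_scope.
Local Open Scope ring_scope.

Section defs.
Context {R : realType}.

Definition dotv (m : nat) (u x : 'rV[R]_m) : R := \sum_(i < m) u 0 i * x 0 i.
Definition enorm (m : nat) (u : 'rV[R]_m) : R := Num.sqrt (dotv u u).

Definition support_fun (m : nat) (K : set 'rV[R]_m) (u : 'rV[R]_m) : \bar R :=
  ereal_sup [set (dotv u x)%:E | x in K].

Definition hausdorff_dist (m : nat) (K L : set 'rV[R]_m) : \bar R :=
  ereal_sup [set `|(support_fun K u - support_fun L u)%E|%E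
            | u in [set u | enorm u = 1]].

(* Vitale zonoid E[X] of a random vector X : the convex body whose support
   function is h(u) = 1/2 E|<u,X>|, i.e. { x | forall u, <u,x> <= h(u) } *)
Definition vitale_support (d : measure_display) (T : measurableType d)
    (P : probability T R) (m : nat) (X : T -> 'rV[R]_m) (u : 'rV[R]_m) : \bar R :=
  ((2%:R^-1)%:E * \int[P]_w (`|dotv u (X w)|)%:E)%E.

Definition vitale_zonoid (d : measure_display) (T : measurableType d)
    (P : probability T R) (m : nat) (X : T -> 'rV[R]_m) : set 'rV[R]_m :=
  [set x | forall u, ((dotv u x)%:E <= vitale_support P X u)%E].

Definition std_gaussian_vector (d : measure_display) (T : measurableType d)
    (P : probability T R) (m : nat) (xi : 'I_m -> T -> R) : Prop :=
  [/\ (forall i, measurable_fun setT (xi i)),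
      (forall i (A : set R), measurable A ->
          P (xi i @^-1` A) = normal_prob 0 1 A)
    & (forall A : 'I_m -> set R, (forall i, measurable (A i)) ->
          fine (P (\bigcap_(i in [set: 'I_m]) (xi i @^-1` A i)))
          = \prod_(i < m) fine (P (xi i @^-1` A i)))].

Definition Gzon (d : measure_display) (T : measurableType d)
    (P : probability T R) (m : nat) (xi : 'I_m -> T -> R) (c : 'rV[R]_m)
    : set 'rV[R]_m :=
  vitale_zonoid P (fun w => c + \row_(i < m) xi i w).

End defs.

(* Main.v *)
Require Import Defs.
From HB Require Import structures.
From mathcomp Require Import all_boot all_order all_algebra.
From mathcomp Require Import all_classical all_reals all_analysis.
From mathcomp Require Import measurable_realfun.
From mathcomp Require Import ring lra.
Import Order.TTheory GRing.Theory Num.Theory.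
Local Open Scope classical_set_scope.
Local Open Scope ring_scope.

Set Implicit Arguments. Unset Strict Implicit. Unset Printing Implicit Defensive.


Section alg.
Context {R : realType} {m : nat}.
Implicit Types (u x y : 'rV[R]_m).

Lemma dotvDr u x y : dotv u (x + y) = dotv u x + dotv u y.
Proof. by rewrite /dotv -big_split; apply: eq_bigr => i _; rewrite mxE mulrDr. Qed.

Lemma dotvZr u (a : R) x : dotv u (a *: x) = a * dotv u x.
Proof. by rewrite /dotv mulr_sumr; apply: eq_bigr => i _; rewrite mxE mulrCA. Qed.

Lemma dotvNr u x : dotv u (- x) = - dotv u x.
Proof. by rewrite /dotv -sumrN; apply: eq_bigr => i _; rewrite mxE mulrN. Qed.

Lemma dotvBr u x y : dotv u (x - y) = dotv u x - dotv u y.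
Proof. by rewrite dotvDr dotvNr. Qed.

Lemma dotvC u x : dotv u x = dotv x u.
Proof. by rewrite /dotv; apply: eq_bigr => i _; rewrite mulrC. Qed.

Lemma dotv_row u (f : 'I_m -> R) : dotv u (\row_i f i) = \sum_(i < m) u 0 i * f i.
Proof. by rewrite /dotv; apply: eq_bigr => i _; rewrite mxE. Qed.

Lemma dotvv_ge0 u : 0 <= dotv u u.
Proof. by rewrite /dotv sumr_ge0// => i _; rewrite -expr2 sqr_ge0. Qed.

Lemma dotvv_gt0 u : u != 0 -> 0 < dotv u u.
Proof.
move=> u0; have [i ui] : exists i, u 0 i != 0.
  apply/existsP; apply: contraNT u0 => /existsPn H; apply/eqP/matrixP => a b.
  by rewrite ord1 mxE; apply/eqP; move: (H b); rewrite negbK.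
rewrite /dotv (bigD1 i)//=.
have h1 : 0 < u 0 i * u 0 i by rewrite -expr2 exprn_even_gt0.
have h2 : 0 <= \sum_(j < m | j != i) u 0 j * u 0 j.
  by rewrite sumr_ge0// => j _; rewrite -expr2 sqr_ge0.
by rewrite ltr_wpDr.
Qed.

Lemma enorm_ge0 u : 0 <= enorm u. Proof. exact: sqrtr_ge0. Qed.

Lemma coord_le_enorm u i : `|u 0 i| <= enorm u.
Proof.
rewrite /enorm -(sqrtr_sqr (u 0 i)) ler_sqrt ?dotvv_ge0// /dotv (bigD1 i)//=.
by rewrite -expr2 lerDl sumr_ge0// => j _; rewrite -expr2 sqr_ge0.
Qed.

Lemma dotv_le u x : `|dotv u x| <= \sum_(i < m) `|u 0 i| * `|x 0 i|.
Proof.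
rewrite /dotv; apply: (le_trans (ler_norm_sum _ _ _)).
by apply: ler_sum => i _; rewrite normrM.
Qed.

Lemma dotv_le_enorm u x : enorm u = 1 -> `|dotv u x| <= m%:R * enorm x.
Proof.
move=> u1; apply: (le_trans (dotv_le u x)).
have -> : (m%:R : R) = \sum_(i < m) 1 by rewrite sumr_const card_ord.
rewrite mulr_suml.
apply: ler_sum => i _; rewrite mul1r.
have := coord_le_enorm u i; rewrite u1 => h.
apply: (le_trans (y := 1 * `|x 0 i|)); first by rewrite ler_wpM2r.
by rewrite mul1r coord_le_enorm.
Qed.

End alg.

Section normal_facts.
Context {R : realType}.
Local Notation mu := (@lebesgue_measure R).
Local Notation N := (@normal_prob R 0 1).

Lemma pdf01E (x : R) : normal_pdf 0 1 x = normal_peak 1 * expR (- x ^+ 2 / 2).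
Proof.
by rewrite /normal_pdf oner_eq0 /normal_fun subr0 expr1n.
Qed.

Lemma pdf01N (x : R) : normal_pdf 0 1 (- x) = normal_pdf 0 1 x.
Proof. by rewrite !pdf01E sqrrN. Qed.


Lemma measurable_pdf01 : measurable_fun setT (normal_pdf (0:R) 1).
Proof. exact: measurable_normal_pdf. Qed.

Lemma normal_probN (A : set R) : measurable A ->
  N [set x | A (- x)] = N A.
Proof.
move=> mA.
have mN : measurable_fun setT (-%R : R -> measurableTypeR R).
  exact: oppr_measurable.
rewrite /normal_prob.
have -> : [set x | A (- x)] = (-%R : R -> measurableTypeR R) @^-1` A by [].
transitivity (\int[mu]_(x in (-%R : R -> measurableTypeR R) @^-1` A)
   ((fun y => (normal_pdf 0 1 y)%:E) \o (-%R)) x)%E.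
  by apply: eq_integral => x _ /=; rewrite pdf01N.
rewrite -ge0_integral_pushforward//.
- apply: eq_measure_integral => B mB _; exact: lebesgue_measureN.
- by apply/measurable_EFinP; apply: measurable_funTS; exact: measurable_pdf01.
- by move=> y _; rewrite lee_fin normal_pdf_ge0.
Qed.


Definition oitv (e : R) : set R := `]-e, e[.

Lemma normal_prob_itv_gt0 (e : R) : 0 < e -> (0 < N (oitv e))%E.
Proof.
move=> e0; rewrite /normal_prob.
pose c := normal_peak 1 * expR (- e ^+ 2 / 2).
pose I := oitv e.
have c0 : 0 < c by rewrite mulr_gt0 ?expR_gt0// normal_peak_gt0// oner_eq0.
apply: (@lt_le_trans _ _ (\int[mu]_(x in I) (cst c%:E x))%E).
  rewrite integral_cst// /I /oitv; last exact: measurable_itv.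
  have := lebesgue_measure_itv `]-e, e[%R; rewrite /= => ->.
  rewrite lte_fin ltrNl opprK (_ : - e < e); last lra.
  by rewrite -EFinM lte_fin mulr_gt0//; lra.
apply: ge0_le_integral => //.
- exact: measurable_itv.
- by move=> x _; rewrite lee_fin ltW.
- by apply/measurable_EFinP; apply: measurable_funTS; exact: measurable_pdf01.
move=> x; rewrite /I /oitv /= in_itv /= => /andP[h1 h2].
rewrite lee_fin pdf01E /c ler_wpM2l ?normal_peak_ge0// ler_expR.
rewrite !mulNr lerN2 ler_wpM2r ?invr_ge0 ?ler0n//.
rewrite !expr2; nra.
Qed.

Lemma abs_exp_bound (x : R) :
  `|x| * expR (- x ^+ 2 / 2) <= expR (- x ^+ 2 / (2 *+ 2)).
Proof.
have e4 : (2 *+ 2 : R) = 4 by rewrite -mulr_natr; lra.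
rewrite e4.
pose e := expR (x ^+ 2 / 4).
have e0 : 0 < e by exact: expR_gt0.
have hx : `|x| <= e.
  apply: le_trans (expR_ge1Dx _).
  have h2 : x ^+ 2 = `|x| ^+ 2 by rewrite real_normK ?num_real.
  have := sqr_ge0 (`|x| - 2); rewrite h2 !expr2; nra.
have -> : - x ^+ 2 / 2 = - (x ^+ 2 / 4) + - (x ^+ 2 / 4) by lra.
rewrite expRD expRN -/e.
have ie : 0 < e^-1 by rewrite invr_gt0.
have iee : e * e^-1 = 1 by rewrite mulfV ?gt_eqF.
have h := ler_wpM2r (ltW (mulr_gt0 ie ie)) hx.
have ee : expR (- x ^+ 2 / 4) = e^-1 by rewrite mulNr expRN.
by rewrite ee; rewrite [e * _]mulrA iee mul1r in h.
Qed.

Lemma normal_integrable_abs : (\int[N]_x (`|x|)%:E < +oo)%E.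
Proof.
have nd := @normal_prob_dominates R 0 1.
set RN := Radon_Nikodym_SigmaFinite.f N mu.
have h1 := Radon_Nikodym_SigmaFinite.change_of_variables nd
  (f := fun x : R => (`|x|)%:E) (E := setT) (fun x => normr_ge0 _) measurableT.
rewrite -h1; last first.
  by apply/measurable_EFinP; apply: measurableT_comp => //; exact: normr_measurable.
have ae : ae_eq mu setT (fun x => (normal_pdf 0 1 x)%:E) RN.
  apply: integral_ae_eq => //.
  - exact: integrable_normal_pdf.
  - exact: measurable_int (Radon_Nikodym_SigmaFinite.f_integrable nd).
  - move=> E _ mE; rewrite -Radon_Nikodym_SigmaFinite.f_integral//.
have mabs : measurable_fun setT (fun x : R => (`|x|)%:E).
  by apply/measurable_EFinP; apply: measurableT_comp => //; exact: normr_measurable.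
have mRN : measurable_fun setT RN.
  exact: measurable_int (Radon_Nikodym_SigmaFinite.f_integrable nd).
have mpdf : measurable_fun setT (fun x : R => (normal_pdf 0 1 x)%:E).
  by apply/measurable_EFinP; exact: measurable_pdf01.
have E : (\int[mu]_x ((`|x|)%:E * RN x) = \int[mu]_x ((`|x|)%:E * (normal_pdf 0 1 x)%:E))%E.
  apply: ae_eq_integral => //.
  - exact: emeasurable_funM.
  - exact: emeasurable_funM.
  - exact: (ae_eq_sym (ae_eqe_mul2l ((fun x => (`|x : R|)%:E) : measurableTypeR R -> \bar R) ae)).
rewrite E.
pose sg : R := Num.sqrt 2.
have sg0 : sg != 0 by rewrite /sg gt_eqF// sqrtr_gt0.
have sg2 : sg ^+ 2 = 2 by rewrite /sg sqr_sqrtr.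
pose K := normal_peak 1 / normal_peak sg.
have pk0 : 0 < normal_peak sg by exact: normal_peak_gt0.
apply: (@le_lt_trans _ _ (\int[mu]_x ((K * normal_pdf 0 sg x)%:E))%E).
  apply: ge0_le_integral => //.
  - by move=> x _; rewrite mule_ge0// lee_fin normal_pdf_ge0.
  - exact: emeasurable_funM.
  - apply/measurable_EFinP; apply: measurable_funM => //.
    exact: measurable_normal_pdf.
  move=> x _; rewrite -EFinM lee_fin pdf01E.
  rewrite /normal_pdf (negbTE sg0) /K /normal_fun subr0 sg2.
  rewrite mulrCA -mulrA ler_wpM2l ?normal_peak_ge0//.
  rewrite mulrA mulVf ?gt_eqF// mul1r.
  exact: abs_exp_bound.
have -> : (\int[mu]_x ((K * normal_pdf 0 sg x)%:E) = K%:E * \int[mu]_x ((normal_pdf 0 sg x)%:E))%E.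
  under eq_integral do rewrite EFinM.
  by rewrite integralZl//; exact: integrable_normal_pdf.
by rewrite integral_normal_pdf mule1 ltry.
Qed.

End normal_facts.

Definition vecT (R : realType) (m : nat) := 'rV[R]_m.
HB.instance Definition _ R m := Choice.on (vecT R m).
HB.instance Definition _ R m := isPointed.Build (vecT R m) 0.

Definition rect (R : realType) m (A : 'I_m -> set R) : set (vecT R m) :=
  [set v | forall i, A i (v 0 i)].
Definition rects (R : realType) m : set (set (vecT R m)) :=
  [set rect A | A in [set A | forall i, measurable (A i)]].

Section gauss.
Context {R : realType} {d : measure_display} {T : measurableType d}
  (P : probability T R) (m : nat) (xi : 'I_m -> T -> R).
Context (HG : std_gaussian_vector P xi).

Local Notation rint f := (P.-integrable setT (EFin \o f)).

Lemma mxi i : measurable_fun setT (xi i).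
Proof. by case: HG. Qed.

Lemma law_xi i (A : set R) : measurable A -> P (xi i @^-1` A) = normal_prob 0 1 A.
Proof. by case: HG => _ h _; exact: h. Qed.

Lemma int_xi i : rint (xi i).
Proof.
apply/integrableP; split; first exact/measurable_EFinP/mxi.
have -> : (\int[P]_x `|(EFin \o xi i) x| = \int[P]_x ((fun y : R => (`|y|)%:E) \o xi i) x)%E.
  by apply: eq_integral => x _.
pose xi' : T -> measurableTypeR R := xi i.
have mxi' : measurable_fun setT xi' := mxi i.
pose ab : measurableTypeR R -> \bar R := fun y => (`|y : R|)%:E.
have mN : measurable_fun setT ab.
  by apply/measurable_EFinP; apply: measurableT_comp => //; exact: normr_measurable.
have -> : (\int[P]_x ((fun y : R => (`|y|)%:E) \o xi i) x = \int[P]_(x in xi' @^-1` setT) (ab \o xi') x)%E by [].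
rewrite -(ge0_integral_pushforward mxi')//.
rewrite (eq_measure_integral (normal_prob 0 1)); first exact: normal_integrable_abs.
by move=> A mA _; rewrite /pushforward; exact: law_xi.
by move=> y _; rewrite /ab lee_fin.
Qed.


Lemma rint_cst (k : R) : rint (fun _ : T => k).
Proof. exact: (finite_measure_integrable_cst P k measurableT). Qed.

Lemma rintD (f g : T -> R) : rint f -> rint g -> rint (fun w => f w + g w).
Proof.
move=> hf hg; have := integrableD measurableT hf hg.
by apply: eq_integrable => // x _.
Qed.

Lemma rintZ (k : R) (f : T -> R) : rint f -> rint (fun w => k * f w).
Proof.
move=> hf; have := integrableZl measurableT k hf.
by apply: eq_integrable => // x _.
Qed.

Lemma rintN (f : T -> R) : rint f -> rint (fun w => - f w).
Proof.
move=> hf; have := rintZ (-1) hf.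
by apply: eq_integrable => // x _ /=; rewrite mulN1r.
Qed.

Lemma rint_abs (f : T -> R) : rint f -> rint (fun w => `|f w|).
Proof.
move=> hf; have := integrable_abse hf.
by apply: eq_integrable => // x _.
Qed.

Lemma rint_sum (I : Type) (s : seq I) (F : I -> T -> R) :
  (forall i, rint (F i)) -> rint (fun w => \sum_(i <- s) F i w).
Proof.
move=> hF; elim: s => [|a s IH].
  by apply: eq_integrable (rint_cst 0) => // x _ /=; rewrite big_nil.
by apply: eq_integrable (rintD (hF a) IH) => // x _ /=; rewrite big_cons.
Qed.

Lemma rint_meas (f : T -> R) : rint f -> measurable_fun setT f.
Proof. by move=> hf; apply/measurable_EFinP; exact: measurable_int hf. Qed.

Lemma rintMb (f h : T -> R) : rint f -> measurable_fun setT h ->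
  (forall w, `|h w| <= 1) -> rint (fun w => f w * h w).
Proof.
move=> hf mh h1.
have hb : [bounded h x | x in setT].
  by exists 1; split => // M M1 x _ /=; exact: le_trans (h1 x) (ltW M1).
have := integrableMl measurableT hf mh hb.
by apply: eq_integrable => // x _.
Qed.


Local Notation VT := (g_sigma_algebraType (@rects R m)).

Lemma rectsI : setI_closed (@rects R m).
Proof.
move=> _ _ [A mA <-] [B mB <-]; exists (fun i => A i `&` B i).
  by move=> i; exact: measurableI.
by apply/seteqP; split => v /= h; [split => i; case: (h i)|move=> i; split; case: h].
Qed.

Lemma coord_meas (i : 'I_m) : measurable_fun setT (fun v : VT => v 0 i : R).
Proof.
move=> _ B mB; rewrite setTI; apply: sub_sigma_algebra.
exists (fun j => if j == i then B else setT).
  by move=> j; case: ifP.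
apply/seteqP; split => v /=.
  by move=> /(_ i); rewrite eqxx.
by move=> h j; case: ifP => // /eqP ->.
Qed.

Definition xiv (w : T) : VT := \row_i xi i w.
Definition nxiv (w : T) : VT := \row_i (- xi i w).

Lemma preim_rect (g : 'I_m -> T -> R) (A : 'I_m -> set R) :
  (fun w => (\row_i g i w : VT)) @^-1` rect A = \bigcap_(i in setT) (g i @^-1` A i).
Proof.
apply/seteqP; split => w /=.
  by move=> h i _; move: (h i); rewrite mxE.
by move=> h i; rewrite mxE; exact: h.
Qed.

Lemma meas_rowfun (g : 'I_m -> T -> R) : (forall i, measurable_fun setT (g i)) ->
  measurable_fun setT (fun w => (\row_i g i w : VT)).
Proof.
move=> mg; apply: (@measurability _ _ T VT setT (fun w => (\row_i g i w : VT)) (@rects R m) erefl).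
move=> _ [_ [A mA <-] <-]; rewrite setTI preim_rect.
apply: fin_bigcap_measurable; first exact: finite_finset.
by move=> i _; rewrite -[X in measurable X]setTI; exact: mg.
Qed.

Lemma mxiv : measurable_fun setT xiv.
Proof. exact: meas_rowfun mxi. Qed.

Lemma mnxiv : measurable_fun setT nxiv.
Proof.
apply: meas_rowfun => i; apply: measurableT_comp; first exact: oppr_measurable.
exact: mxi.
Qed.


Lemma meas_bigcap (A : 'I_m -> set R) : (forall i, measurable (A i)) ->
  measurable (\bigcap_(i in setT) (xi i @^-1` A i)).
Proof.
move=> mA; apply: fin_bigcap_measurable; first exact: finite_finset.
by move=> i _; rewrite -[X in measurable X]setTI; exact: mxi.
Qed.

Lemma P_bigcap (A : 'I_m -> set R) : (forall i, measurable (A i)) ->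
  P (\bigcap_(i in setT) (xi i @^-1` A i)) =
  (\prod_(i < m) fine (normal_prob 0 1 (A i)))%:E.
Proof.
move=> mA; case: HG => _ hl hp.
rewrite -[LHS]fineK; last exact: fin_num_measure (meas_bigcap mA).
congr EFin; rewrite hp//; apply: eq_bigr => i _; rewrite hl//.
Qed.

Definition Xv : {mfun T >-> VT} := HB.pack xiv (isMeasurableFun.Build _ _ _ _ _ mxiv).
Definition Xnv : {mfun T >-> VT} := HB.pack nxiv (isMeasurableFun.Build _ _ _ _ _ mnxiv).

Lemma dist_sym (A : set VT) : measurable A ->
  distribution P Xv A = distribution P Xnv A.
Proof.
move=> mA.
apply: (@measure_unique _ R VT (@rects R m) (fun _ => setT) erefl rectsI _ _
   (distribution P Xv) (distribution P Xnv) _ _ A mA).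
- by move=> _; exists (fun _ => setT) => //; apply/seteqP; split.
- by apply/seteqP; split => // x _; exists 0%N.
- move=> _ [B mB <-].
  change (P (xiv @^-1` rect B) = P (nxiv @^-1` rect B)).
  have -> : xiv @^-1` rect B = \bigcap_(i in setT) (xi i @^-1` B i).
    exact: preim_rect.
  have -> : nxiv @^-1` rect B =
      \bigcap_(i in setT) (xi i @^-1` [set x | B i (- x)]).
    by rewrite (preim_rect (fun i w => - xi i w)).
  rewrite !P_bigcap//; last first.
    by move=> i; rewrite -[X in measurable X]setTI; apply: oppr_measurable.
  congr EFin; apply: eq_bigr => i _; rewrite normal_probN//.
- by move=> _; change (P (xiv @^-1` setT) < +oo)%E; rewrite preimage_setT probability_setT ltry.
Qed.


Definition Zf (u : 'rV[R]_m) (w : T) : R := \sum_(i < m) u 0 i * xi i w.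

Lemma rint_Z u : rint (Zf u).
Proof. by apply: rint_sum => i; apply: rintZ; exact: int_xi. Qed.

Lemma sym_int (b : R) (u : 'rV[R]_m) :
  (\int[P]_w (`|b + Zf u w|)%:E = \int[P]_w (`|b - Zf u w|)%:E)%E.
Proof.
pose phi : VT -> \bar R := fun v => (`|b + \sum_(i < m) u 0 i * (v : 'rV[R]_m) 0 i|)%:E.
have mphi : measurable_fun setT phi.
  apply/measurable_EFinP; apply: measurableT_comp; first exact: normr_measurable.
  apply: measurable_funD => //; apply: measurable_sum => i.
  by apply: measurable_funM => //; exact: coord_meas.
have phi0 : forall y, (0 <= phi y)%E by move=> y; rewrite lee_fin.
transitivity (\int[P]_w (phi \o Xv) w)%E.
  by apply: eq_integral => w _; rewrite /phi /= /Zf; under [in RHS]eq_bigr do rewrite mxE.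
rewrite -ge0_integral_distribution//.
rewrite (eq_measure_integral (distribution P Xnv)); last first.
  by move=> A mA _; exact: dist_sym.
rewrite ge0_integral_distribution//.
apply: eq_integral => w _; rewrite /phi /= /Zf.
under eq_bigr do rewrite mxE mulrN.
by rewrite sumrN.
Qed.

End gauss.

Section main.
Context {R : realType} {d : measure_display} {T : measurableType d}
  (P : probability T R) (m : nat) (xi : 'I_m -> T -> R).
Context (HG : std_gaussian_vector P xi).

Local Notation rint f := (P.-integrable setT (EFin \o f)).
Local Notation Z := (Zf xi).

Lemma Rint_sum (I : Type) (s : seq I) (F : I -> T -> R) :
  (forall i, rint (F i)) ->
  \int[P]_w (\sum_(i <- s) F i w) = \sum_(i <- s) \int[P]_w F i w.
Proof.
move=> hF; elim: s => [|a s IH].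
  rewrite big_nil (eq_Rintegral P (g := fun _ => 0)); last by move=> x _; rewrite big_nil.
  by rewrite (Rintegral_cst P measurableT) mul0r.
rewrite big_cons -IH -RintegralD//; last exact: rint_sum.
by apply: eq_Rintegral => x _; rewrite big_cons.
Qed.

Lemma Rint_fin (f : T -> R) : rint f -> (\int[P]_w (f w)%:E)%E = (\int[P]_w f w)%:E.
Proof. by move=> hf; rewrite /Rintegral fineK//; exact: integrable_fin_num. Qed.

Lemma dotX c u w : dotv u (c + \row_i xi i w) = dotv u c + Z u w.
Proof. by rewrite dotvDr dotv_row. Qed.

Definition Iv (u : 'rV[R]_m) (b : R) : R := \int[P]_w `|b + Z u w|.

Definition hv (c u : 'rV[R]_m) : R := 2^-1 * Iv u (dotv u c).

Lemma rint_absZ u b : rint (fun w => `|b + Z u w|).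
Proof. by apply: rint_abs; apply: rintD; [exact: rint_cst|exact: rint_Z]. Qed.

Lemma vsE c u : vitale_support P (fun w => c + \row_(i < m) xi i w) u = (hv c u)%:E.
Proof.
rewrite /vitale_support /hv /Iv EFinM; congr (_ * _)%E.
under eq_integral do rewrite dotX.
by rewrite Rint_fin//; exact: rint_absZ.
Qed.


Definition sg0 (y : R) : R := 2 * \1_(`[0, +oo[%classic : set R) y - 1.

Lemma sg0_meas : measurable_fun setT sg0.
Proof.
apply: measurable_funB => //; apply: measurable_funM => //.
Qed.

Lemma sg0E y : sg0 y = if 0 <= y then 1 else -1.
Proof.
rewrite /sg0 indicE; case: ifPn => h.
  by rewrite mem_set /= ?in_itv /= ?h //; lra.
rewrite memNset /= ?in_itv /= ?(negbTE h) //; lra.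
Qed.

Lemma sg0_mul y : sg0 y * y = `|y|.
Proof.
rewrite sg0E; case: ifPn => h; first by rewrite mul1r ger0_norm.
by rewrite mulN1r ltr0_norm// ltNge.
Qed.

Lemma sg0_norm y : `|sg0 y| <= 1.
Proof. by rewrite sg0E; case: ifPn => _; rewrite ?normrN normr1. Qed.


Lemma rint_aZ v b : rint (fun w => b + Z v w).
Proof. by apply: rintD; [exact: rint_cst|exact: rint_Z]. Qed.

Lemma supp_point c u : exists x, Gzon P xi c x /\ dotv u x = hv c u.
Proof.
pose s w := sg0 (dotv u c + Z u w).
have ms : measurable_fun setT s.
  by apply: measurableT_comp; [exact: sg0_meas|exact: rint_meas (rint_aZ _ _)].
have s1 w : `|s w| <= 1 by exact: sg0_norm.
pose Xj j w := c 0 j + xi j w.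
have rX j : rint (Xj j) by apply: rintD; [exact: rint_cst|exact: int_xi].
have rXs j : rint (fun w => Xj j w * s w) by exact: rintMb.
exists (\row_j (2^-1 * \int[P]_w (Xj j w * s w))).
have key v : dotv v (\row_j (2^-1 * \int[P]_w (Xj j w * s w))) =
    2^-1 * \int[P]_w ((dotv v c + Z v w) * s w).
  rewrite dotv_row.
  transitivity (2^-1 * \sum_(j < m) \int[P]_w (v 0 j * (Xj j w * s w))).
    rewrite mulr_sumr; apply: eq_bigr => j _; rewrite RintegralZl//.
    by rewrite mulrCA.
  congr (_ * _); rewrite -Rint_sum; last by move=> j; apply: rintZ.
  apply: eq_Rintegral => w _; rewrite /dotv /Zf -big_split mulr_suml.
  by apply: eq_bigr => j _ /=; rewrite /Xj; ring.
split.
- move=> v; rewrite vsE key lee_fin /hv /Iv ler_wpM2l ?invr_ge0 ?ler0n//.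
  apply: le_Rintegral => //.
  + exact: rintMb (rint_aZ _ _) ms s1.
  + exact: rint_absZ.
  + move=> w _; apply: le_trans (ler_norm _) _.
    by rewrite normrM ler_piMr// s1.
- rewrite key /hv /Iv; congr (_ * _); apply: eq_Rintegral => w _.
  by rewrite mulrC sg0_mul.
Qed.

Lemma support_Gzon c u : support_fun (Gzon P xi c) u = (hv c u)%:E.
Proof.
apply/eqP; rewrite eq_le; apply/andP; split.
  by apply: ge_ereal_sup => _ [x Hx <-]; rewrite -vsE; exact: Hx.
have [x [Hx <-]] := supp_point c u.
by apply: ereal_sup_ubound; exists x.
Qed.


Lemma Iv_lip u a a' : Iv u a' - Iv u a <= `|a' - a|.
Proof.
have h : Iv u a' <= \int[P]_w (`|a + Z u w| + `|a' - a|).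
  apply: le_Rintegral => //; first exact: rint_absZ.
    by apply: rintD; [exact: rint_absZ|exact: rint_cst].
  move=> w _; apply: le_trans (ler_normD _ _).
  by rewrite addrAC addrCA subrr addr0 addrC.
have e : \int[P]_w (`|a + Z u w| + `|a' - a|) = Iv u a + `|a' - a|.
  rewrite RintegralD//; [|exact: rint_absZ|exact: rint_cst].
  rewrite (Rintegral_cst P measurableT).
  set q := fine _; have -> : q = 1 by exact: (congr1 fine (probability_setT P)).
  by rewrite mulr1.
rewrite e in h; lra.
Qed.

Lemma hv_lip c c' u : `|hv c' u - hv c u| <= 2^-1 * `|dotv u c' - dotv u c|.
Proof.
rewrite /hv -mulrBr normrM ger0_norm ?invr_ge0 ?ler0n//.
rewrite ler_wpM2l ?invr_ge0 ?ler0n//.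
have h1 := Iv_lip u (dotv u c) (dotv u c').
have h2 := Iv_lip u (dotv u c') (dotv u c).
rewrite distrC in h2.
rewrite ler_norml; apply/andP; split; lra.
Qed.

Lemma Iv_sym u b : Iv u (- b) = Iv u b.
Proof.
rewrite /Iv /Rintegral; congr fine; rewrite sym_int//.
by apply: eq_integral => w _; rewrite -opprD normrN.
Qed.

Lemma conv_abs (al be p q : R) : 0 <= al -> 0 <= be ->
  `|al * p + be * q| <= al * `|p| + be * `|q|.
Proof.
move=> a0 b0; apply: le_trans (ler_normD _ _) _.
by rewrite !normrM (ger0_norm a0) (ger0_norm b0).
Qed.

Lemma Iv_mono u a s t : 0 < s -> s < t -> Iv u (s * a) <= Iv u (t * a).
Proof.
move=> s0 st; have t0 : 0 < t by lra.
pose al := (t + s) / (2 * t); pose be := (t - s) / (2 * t).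
have al0 : 0 <= al by rewrite /al divr_ge0//; lra.
have be0 : 0 <= be by rewrite /be divr_ge0//; lra.
have alb : al + be = 1 by rewrite /al /be; field; lra.
have h : Iv u (s * a) <= \int[P]_w (al * `|t * a + Z u w| + be * `|- (t * a) + Z u w|).
  apply: le_Rintegral => //; first exact: rint_absZ.
    by apply: rintD; apply: rintZ; exact: rint_absZ.
  move=> w _; apply: le_trans (conv_abs _ _ al0 be0).
  have -> : al * (t * a + Z u w) + be * (- (t * a) + Z u w) = s * a + Z u w.
    by rewrite /al /be; field; lra.
  by [].
have e : \int[P]_w (al * `|t * a + Z u w| + be * `|- (t * a) + Z u w|) =
    al * Iv u (t * a) + be * Iv u (- (t * a)).
  rewrite RintegralD//; try by apply: rintZ; exact: rint_absZ.
  by rewrite !RintegralZl//; exact: rint_absZ.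
by rewrite e Iv_sym -mulrDl alb mul1r in h.
Qed.


Lemma rint_indic (A : set T) : measurable A -> rint (\1_A : T -> R).
Proof.
move=> mA.
have h : rint (fun w => 1 * (\1_A w : R)).
  apply: rintMb; [exact: rint_cst|exact: measurable_indic|].
  by move=> w; rewrite indicE; case: (_ \in _); rewrite ?normr0 ?normr1.
by apply: eq_integrable h => // w _ /=; rewrite mul1r.
Qed.

Lemma Rint_indic (A : set T) : measurable A -> \int[P]_w (\1_A w : R) = fine (P A).
Proof. by move=> mA; rewrite /Rintegral integral_indic// setIT. Qed.

Lemma Iv_strict c s t : c != 0 -> 0 < s -> s < t ->
  Iv c (s * dotv c c) < Iv c (t * dotv c c).
Proof.
move=> c0 s0 st; have t0 : 0 < t by lra.
set a := dotv c c; have a0 : 0 < a by exact: dotvv_gt0.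
pose S := \sum_(i < m) `|c 0 i|.
have S0 : 0 <= S by rewrite sumr_ge0.
pose e := t * a / (2 * (S + 1)).
have e0 : 0 < e by rewrite /e divr_gt0 ?mulr_gt0//; lra.
have Se : S * e <= t * a / 2.
  have -> : t * a / 2 = (S + 1) * e by rewrite /e; field; lra.
  by rewrite ler_wpM2r//; [exact: ltW|lra].
pose A' := \bigcap_(i in setT) (xi i @^-1` oitv e).
have mI : forall i : 'I_m, measurable (oitv e) by move=> i; exact: measurable_itv.
have mA' : measurable A' by exact: (meas_bigcap HG (A := fun _ => oitv e) mI).
have PA : 0 < fine (P A').
  rewrite /A' (P_bigcap HG (A := fun _ => oitv e) mI) /=; apply: prodr_gt0 => i _; apply: fine_gt0.
  rewrite normal_prob_itv_gt0//=.
  apply: le_lt_trans (probability_le1 (normal_prob 0 1) (mI i)) _.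
  exact: ltey.
have ZA w : A' w -> `|Z c w| <= t * a / 2.
  move=> Aw; rewrite /Zf; apply: le_trans (ler_norm_sum _ _ _) _.
  apply: le_trans Se; rewrite /S mulr_suml; apply: ler_sum => i _.
  rewrite normrM ler_wpM2l//.
  have := Aw i I; rewrite /oitv /= in_itv /= => /andP[h1 h2].
  rewrite ler_norml; apply/andP; split; lra.
pose kap := (t - s) * a / 2.
have kap0 : 0 < kap by rewrite /kap divr_gt0// mulr_gt0//; lra.
pose al := (t + s) / (2 * t); pose be := (t - s) / (2 * t).
have al0 : 0 <= al by rewrite /al divr_ge0//; lra.
have be0 : 0 <= be by rewrite /be divr_ge0//; lra.
have alb : al + be = 1 by rewrite /al /be; field; lra.
have f1 : al * (t * a) = (t + s) * a / 2 by rewrite /al; field; lra.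
have f2 : be * (t * a) = (t - s) * a / 2 by rewrite /be; field; lra.
have pt w : `|s * a + Z c w| + kap * (\1_A' w : R) <=
    al * `|t * a + Z c w| + be * `|- (t * a) + Z c w|.
  rewrite indicE; case: (boolP (w \in A')) => hw.
  - rewrite mulr1; have := ZA w (set_mem hw); rewrite ler_norml => /andP[z1 z2].
    set z := Z c w in z1 z2 *.
    have f3 : be * z <= (t - s) * a / 4.
      have : 0 <= be * (t * a / 2 - z) by rewrite mulr_ge0//; lra.
      have -> : be * (t * a / 2 - z) = be * (t * a) / 2 - be * z by ring.
      rewrite f2; lra.
    have f4 : - ((t + s) * a / 4) <= al * z.
      have : 0 <= al * (z + t * a / 2) by rewrite mulr_ge0//; lra.
      have -> : al * (z + t * a / 2) = al * z + al * (t * a) / 2 by ring.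
      rewrite f1; lra.
    have f5 : al * z + be * z = z by rewrite -mulrDl alb mul1r.
    rewrite (ger0_norm (x := t * a + z)); last lra.
    rewrite (ler0_norm (x := - (t * a) + z)); last lra.
    have -> : al * (t * a + z) + be * - (- (t * a) + z) =
        al * (t * a) + be * (t * a) + (al * z - be * z) by ring.
    rewrite f1 f2.
    have sa0 : 0 < s * a by rewrite mulr_gt0.
    rewrite /kap; case: (lerP 0 (s * a + z)) => hz.
      rewrite ger0_norm//; lra.
    rewrite ltr0_norm//; lra.
  - rewrite (_ : (false%:R : R) = 0)// mulr0 addr0; apply: le_trans (conv_abs _ _ al0 be0).
    have -> : al * (t * a + Z c w) + be * (- (t * a) + Z c w) = s * a + Z c w.
      by rewrite /al /be; field; lra.
    by [].
have h : \int[P]_w (`|s * a + Z c w| + kap * (\1_A' w : R)) <=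
    \int[P]_w (al * `|t * a + Z c w| + be * `|- (t * a) + Z c w|).
  apply: le_Rintegral => //.
    by apply: rintD; [exact: rint_absZ|apply: rintZ; exact: rint_indic].
  by apply: rintD; apply: rintZ; exact: rint_absZ.
have e1 : \int[P]_w (al * `|t * a + Z c w| + be * `|- (t * a) + Z c w|) =
    al * Iv c (t * a) + be * Iv c (- (t * a)).
  rewrite RintegralD//; try by apply: rintZ; exact: rint_absZ.
  by rewrite !RintegralZl//; exact: rint_absZ.
have e2 : \int[P]_w (`|s * a + Z c w| + kap * (\1_A' w : R)) =
    Iv c (s * a) + kap * fine (P A').
  rewrite RintegralD//; [|exact: rint_absZ|apply: rintZ; exact: rint_indic].
  by rewrite RintegralZl ?Rint_indic//; exact: rint_indic.
rewrite e1 e2 Iv_sym -mulrDl alb mul1r in h.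
have : 0 < kap * fine (P A') by rewrite mulr_gt0.
lra.
Qed.

End main.

Unset Implicit Arguments. Set Strict Implicit.

Theorem proposition2p9 (R : realType) (d : measure_display) (T : measurableType d)
    (P : probability T R) (m : nat) (xi : 'I_m -> T -> R) :
  std_gaussian_vector P xi ->
  (forall c : 'rV[R]_m, forall eps : R, 0 < eps ->
     exists2 delta : R, 0 < delta &
       forall c' : 'rV[R]_m, enorm (c' - c) < delta ->
         (hausdorff_dist (Gzon P xi c') (Gzon P xi c) <= eps%:E)%E) /\
  (forall c : 'rV[R]_m, c != 0 ->
     forall s t : R, 0 < s -> s < t ->
       Gzon P xi (s *: c) `<` Gzon P xi (t *: c)).
Proof.
move=> HG; split.
- move=> c eps eps0.
  have M0 : (0 : R) <= m%:R by rewrite ler0n.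
  pose delta := eps / (m%:R + 1).
  have dl0 : 0 < delta by rewrite /delta divr_gt0//; lra.
  have hd : m%:R * delta <= eps.
    have e : delta * (m%:R + 1) = eps by rewrite /delta; field; lra.
    rewrite -e mulrDr mulr1 mulrC; lra.
  exists delta => // c' hc'.
  apply: ge_ereal_sup => _ [u u1 <-].
  rewrite !(support_Gzon HG) -EFinB /= lee_fin.
  apply: le_trans (hv_lip HG c c' u) _.
  rewrite -dotvBr.
  have h1 := dotv_le_enorm (c' - c) u1.
  have h2 : m%:R * enorm (c' - c) <= m%:R * delta.
    by rewrite ler_wpM2l// ltW.
  have h3 : 0 <= `|dotv u (c' - c)| by [].
  lra.
- move=> c c0 s t s0 st; split.
  + move=> x Hx v; have := Hx v.
    rewrite !(vsE HG) !lee_fin /hv !dotvZr => h; apply: le_trans h _.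
    rewrite ler_wpM2l ?invr_ge0 ?ler0n//; exact: (Iv_mono HG).
  + move=> Hsub; have [x [Hx hx]] := supp_point HG (t *: c) c.
    have := Hsub x Hx c; rewrite (vsE HG) hx lee_fin /hv !dotvZr => h.
    have := Iv_strict HG c0 s0 st.
    rewrite ler_pM2l ?invr_gt0 ?ltr0n// in h; lra.
Qed.
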